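(* Let $f\in\mathbb{R}[X_1,\dots,X_n]$ be a non-constant polynomial of degree $2d$ with $|\Omega|=1$. Then $f_*=f_{sos}=f_{gp}$.
   Context: $\mathbb{N}=\{0,1,2,\dots\}$. For $\alpha\in\mathbb{N}^n$ write $\underline{X}^\alpha=X_1^{\alpha_1}\cdots X_n^{\alpha_n}$, $|\alpha|=\sum_i\alpha_i$, and for $a\in\mathbb{R}^n$, $a^\alpha=\prod_i a_i^{\alpha_i}$ with $0^0=1$. For $f=\sum_\alpha f_\alpha\underline{X}^\alpha$ of degree $2d$: $f_0$ is the constant term, $f_{2d,i}$ the coefficient of $X_i^{2d}$, $\Omega=\{\alpha: f_\alpha\ne0\}\setminus\{\underline{0},2d\epsilon_1,\dots,2d\epsilon_n\}$, $\Delta=\{\alpha\in\Omega:\ f_\alpha<0\text{ or }\alpha_i\text{ odd for some }i\}$, $\Delta^{<2d}=\{\alpha\in\Delta:|\alpha|<2d\}$. Define $f_*=\inf\{f(x):x\in\mathbb{R}^n\}$, $f_{sos}=\sup\{r\in\mathbb{R}: f-r\text{ is a sum of squares of polynomials}\}$, and $f_{gp}=\sup$ of the set of $r\in\mathbb{R}$ for which there exist reals $a_{\alpha,i}\ge0$ ($\alpha\in\Delta$, $i=1,\dots,n$), with $a_{\alpha,i}=0$ iff $\alpha_i=0$, such that, with $a_\alpha=(a_{\alpha,1},\dots,a_{\alpha,n})$: (1) $(2d)^{2d}a_\alpha^\alpha=|f_\alpha|^{2d}\alpha^\alpha$ for each $\alpha\in\Delta$ with $|\alpha|=2d$; (2)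 $f_{2d,i}\ge\sum_{\alpha\in\Delta}a_{\alpha,i}$ for all $i$; (3) $f_0-r\ge\sum_{\alpha\in\Delta^{<2d}}(2d-|\alpha|)\big[\frac{|f_\alpha|^{2d}\alpha^\alpha}{(2d)^{2d}a_\alpha^\alpha}\big]^{1/(2d-|\alpha|)}$ (with $\sup\emptyset=-\infty$). *)

(* Defs.v *)
From HB Require Import structures.
From mathcomp Require Import all_boot all_order all_algebra.
Import Order.TTheory GRing.Theory Num.Theory.
From mathcomp Require Import mpoly.
From mathcomp Require Import boolp classical_sets reals constructive_ereal ereal exp.
Set Implicit Arguments. Unset Strict Implicit. Unset Printing Implicit Defensive.
Local Open Scope ring_scope.

Definition pure_mnm (n d : nat) (i : 'I_n) : 'X_{1..n} := mnm_muln (mnm1 i) (2 * d).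

Definition excluded_mnm (n d : nat) (m : 'X_{1..n}) : bool :=
  (m == mnm0) || [exists i : 'I_n, m == pure_mnm d i].

Section Defs.
Variables (R : realType) (n : nat).

Definition Omega (f : {mpoly R[n]}) (d : nat) : seq 'X_{1..n} :=
  [seq m <- msupp f | ~~ excluded_mnm d m].

Definition Delta (f : {mpoly R[n]}) (d : nat) : seq 'X_{1..n} :=
  [seq m <- Omega f d | (f@_m < 0) || [exists i : 'I_n, odd (m i)]].

Definition Delta_lt (f : {mpoly R[n]}) (d : nat) : seq 'X_{1..n} :=
  [seq m <- Delta f d | (mdeg m < 2 * d)%N].

(* a^alpha = prod_i a_i^{alpha_i}  (with 0^0 = 1) *)
Definition mpow (a : 'I_n -> R) (m : 'X_{1..n}) : R := \prod_(i < n) a i ^+ m i.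

Definition mself (m : 'X_{1..n}) : R := mpow (fun i => (m i)%:R) m.

Definition gp_feasible (f : {mpoly R[n]}) (d : nat) (r : R) : Prop :=
  exists a : 'X_{1..n} -> 'I_n -> R,
    (forall m, m \in Delta f d -> forall i : 'I_n,
        0 <= a m i /\ (a m i = 0 <-> m i = 0%N)) /\
    (forall m, m \in Delta f d -> mdeg m = (2 * d)%N ->
        ((2 * d)%N%:R ^+ (2 * d)) * mpow (a m) m
        = `|f@_m| ^+ (2 * d) * mself m) /\
    (forall i : 'I_n, \sum_(m <- Delta f d) a m i <= f@_(pure_mnm d i)) /\
    (\sum_(m <- Delta_lt f d)
        ((2 * d - mdeg m)%N%:R *
         powR (`|f@_m| ^+ (2 * d) * mself m / (((2 * d)%N%:R ^+ (2 * d)) * mpow (a m) m))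
              (((2 * d - mdeg m)%N%:R)^-1))
      <= f@_mnm0 - r).

Definition is_sos (p : {mpoly R[n]}) : Prop :=
  exists s : seq {mpoly R[n]}, p = \sum_(q <- s) q ^+ 2.

(* f_* = inf_x f(x), f_sos, f_gp, as extended reals (sup of empty set = -oo) *)
Definition f_star (f : {mpoly R[n]}) : \bar R :=
  ereal_inf [set (f.@[x])%:E | x in [set: 'I_n -> R]].

Definition f_sos (f : {mpoly R[n]}) : \bar R :=
  ereal_sup [set r%:E | r in [set r : R | is_sos (f - r%:MP)]].

Definition f_gp (f : {mpoly R[n]}) (d : nat) : \bar R :=
  ereal_sup [set r%:E | r in [set r : R | gp_feasible f d r]].

End Defs.

(* Main.v *)
Require Import Defs.
From HB Require Import structures.
From mathcomp Require Import all_boot all_order all_algebra.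
Import Order.TTheory GRing.Theory Num.Theory.
From mathcomp Require Import mpoly.
From mathcomp Require Import boolp classical_sets reals constructive_ereal ereal exp.
From mathcomp Require Import ring lra.
Local Open Scope ring_scope.
Set Implicit Arguments. Unset Strict Implicit. Unset Printing Implicit Defensive.

Section SOS.
Variables (R : realType) (n : nat).
Notation P := {mpoly R[n]}.

Lemma sos0 : is_sos (0 : P).
Proof. by exists [::]; rewrite big_nil. Qed.

Lemma sos_sq (q : P) : is_sos (q ^+ 2).
Proof. by exists [:: q]; rewrite big_seq1. Qed.

Lemma sosD (p q : P) : is_sos p -> is_sos q -> is_sos (p + q).
Proof. by move=> [s ->] [t ->]; exists (s ++ t); rewrite big_cat. Qed.

Lemma sosM (p q : P) : is_sos p -> is_sos q -> is_sos (p * q).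
Proof.
move=> [s ->] [t ->]; exists (flatten [seq [seq a * b | b <- t] | a <- s]).
rewrite big_flatten /= big_map mulr_suml; apply: eq_bigr => a _.
rewrite big_map mulr_sumr; apply: eq_bigr => b _; by rewrite exprMn.
Qed.

Lemma sosC (c : R) : 0 <= c -> is_sos (c%:MP : P).
Proof.
move=> c0; exists [:: (Num.sqrt c)%:MP]; rewrite big_seq1.
by rewrite -rmorphXn /= sqr_sqrtr.
Qed.

Lemma sosZ (c : R) (p : P) : 0 <= c -> is_sos p -> is_sos (c%:MP * p).
Proof. by move=> c0 sp; apply: sosM => //; apply: sosC. Qed.

Lemma sos_sum (I : Type) (r : seq I) (F : I -> P) :
  (forall i, is_sos (F i)) -> is_sos (\sum_(i <- r) F i).
Proof.
move=> H; elim: r => [|a r IH]; first by rewrite big_nil; apply: sos0.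
by rewrite big_cons; apply: sosD.
Qed.

Lemma sos_natmul (p : P) k : is_sos p -> is_sos (k%:R * p).
Proof.
move=> sp; have -> : (k%:R : P) = (k%:R : R)%:MP by rewrite mpolyC_nat.
by apply: sosZ.
Qed.

Fixpoint Bp (a b : P) m := match m with 0 => 0 | k.+1 => b * Bp a b k + k.+1%:R * a ^+ k end.

Lemma Bp_id a b m :
  m%:R * a ^+ m.+1 - m.+1%:R * a ^+ m * b + b ^+ m.+1 = (a - b) ^+ 2 * Bp a b m.
Proof.
elim: m => [|m IH] /=; first by rewrite !expr0 !expr1 mulr0; ring.
have -> : (a - b) ^+ 2 * (b * Bp a b m + m.+1%:R * a ^+ m)
   = b * ((a - b) ^+ 2 * Bp a b m) + m.+1%:R * a ^+ m * (a - b) ^+ 2 by ring.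
rewrite -IH !exprS -[m.+2]addn2 -[m.+1]addn1 !natrD; ring.
Qed.

Lemma Bp_sos p q m : is_sos (Bp (p ^+ 2) (q ^+ 2) m).
Proof.
elim: m => [|m IH] /=; first exact: sos0.
apply: sosD; first by apply: sosM => //; apply: sos_sq.
by apply: sos_natmul; rewrite -exprM mulnC exprM; apply: sos_sq.
Qed.

Lemma sum3 (I : Type) (r : seq I) (A B : I -> P) (c : P) :
  \sum_(i <- r) (A i - B i + c) = \sum_(i <- r) A i - \sum_(i <- r) B i + c *+ size r.
Proof.
elim: r => [|a r IH]; first by rewrite !big_nil subrr addr0.
by rewrite !big_cons IH /= mulrS; ring.
Qed.

Lemma natCV (m : nat) : m != 0%N -> (m%:R : P) * (m%:R^-1 : R)%:MP = 1.
Proof. by move=> m0; rewrite -mpolyC_nat -mpolyCM mulfV ?pnatr_eq0 // mpolyC1. Qed.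

Lemma H_sos (s : seq P) :
  is_sos (\sum_(p <- s) (p ^+ 2) ^+ size s - (size s)%:R * \prod_(p <- s) p ^+ 2).
Proof.
elim: s => [|w s IH] /=.
  by rewrite big_nil big_nil mul0r subr0; apply: sos0.
case: s IH => [|w' s'] IH.
  by rewrite /= big_seq1 big_seq1 expr1 mul1r subrr; apply: sos0.
have m0 : size (w' :: s') != 0%N by [].
move: m0 IH; set s := w' :: s'; clearbody s => m0 IH.
set m := size s.
have E : \sum_(p <- w :: s) (p ^+ 2) ^+ m.+1 - m.+1%:R * \prod_(p <- w :: s) p ^+ 2
  = (m%:R^-1 : R)%:MP * (\sum_(p <- s) ((p ^+ 2 - w ^+ 2) ^+ 2 * Bp (p ^+ 2) (w ^+ 2) m)
      + m.+1%:R * w ^+ 2 * (\sum_(p <- s) (p ^+ 2) ^+ m - m%:R * \prod_(p <- s) p ^+ 2)).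
  have -> : \sum_(p <- s) ((p ^+ 2 - w ^+ 2) ^+ 2 * Bp (p ^+ 2) (w ^+ 2) m)
       = \sum_(p <- s) (m%:R * (p ^+ 2) ^+ m.+1 - m.+1%:R * (p ^+ 2) ^+ m * w ^+ 2 + (w ^+ 2) ^+ m.+1).
    by apply: eq_bigr => p _; rewrite Bp_id.
  rewrite sum3 -!mulr_sumr -mulr_suml -mulr_sumr !big_cons -/m.
  apply: (@mulfI _ (m%:R : P)).
    by rewrite -mpolyC_nat mpolyC_eq0 pnatr_eq0.
  rewrite [RHS]mulrA natCV // mul1r -mulr_natl.
  rewrite -[m.+1]addn1 !natrD; ring.
rewrite E; apply: sosZ; first by rewrite invr_ge0 ler0n.
apply: sosD; first by apply: sos_sum => p; apply: sosM; [apply: sos_sq|apply: Bp_sos].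
by rewrite -mulrA; apply: sos_natmul; apply: sosM => //; apply: sos_sq.
Qed.

Lemma G_sos (s : seq P) k (e : R) : size s = (2 * k)%N -> e ^+ 2 = 1 ->
  is_sos (\sum_(p <- s) p ^+ (2 * k) - (2 * k)%:R * e%:MP * \prod_(p <- s) p).
Proof.
move=> sz e2.
have szA : size (take k s) = k by apply: size_takel; rewrite sz mul2n -addnn leq_addr.
have szB : size (drop k s) = k by rewrite size_drop sz mul2n -addnn addnK.
rewrite -(cat_take_drop k s) !big_cat /=.
set A := take k s in szA *; set B := drop k s in szB *.
have HA := H_sos A; have HB := H_sos B; rewrite szA in HA; rewrite szB in HB.
rewrite !prodrXl in HA HB.
have Ex r : \sum_(p <- r) p ^+ (2 * k) = \sum_(p <- r) (p ^+ 2) ^+ k.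
  by apply: eq_bigr => p _; rewrite exprM.
rewrite !Ex.
set PA := \prod_(p <- A) p; set PB := \prod_(p <- B) p.
set SA := \sum_(p <- A) _; set SB := \sum_(p <- B) _.
have -> : SA + SB - (2 * k)%:R * e%:MP * (PA * PB) =
   (SA - k%:R * PA ^+ 2) + (SB - k%:R * PB ^+ 2) + k%:R * (PA - e%:MP * PB) ^+ 2
   + k%:R * (1 - e%:MP ^+ 2) * PB ^+ 2.
  by rewrite natrM; ring.
rewrite -rmorphXn /= e2 mpolyC1 subrr mulr0 mul0r addr0.
apply: sosD; first by apply: sosD.
by apply: sos_natmul; apply: sos_sq.
Qed.
End SOS.

Section Struct.
Variables (R : realType) (n d : nat) (f : {mpoly R[n]}) (al : 'X_{1..n}).
Hypothesis d0 : (0 < d)%N.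
Hypothesis Om : Omega f d = [:: al].

Lemma pureX (i : 'I_n) : ('X_[pure_mnm d i] : {mpoly R[n]}) = 'X_i ^+ (2 * d).
Proof. by rewrite /pure_mnm mpolyXn. Qed.
Lemma pureE (i j : 'I_n) : pure_mnm d i j = if i == j then (2 * d)%N else 0%N.
Proof. rewrite /pure_mnm mulmnE mnm1E; by case: (i == j); rewrite ?mul1n ?mul0n. Qed.

Lemma pure_neq0 (i : 'I_n) : pure_mnm d i != 0%MM.
Proof.
apply/eqP => /mnmP /(_ i); rewrite pureE eqxx mnm0E => /eqP.
by rewrite muln_eq0 /= => /eqP E; move: d0; rewrite E.
Qed.

Lemma pure_inj (i j : 'I_n) : (pure_mnm d i == pure_mnm d j) = (i == j).
Proof.
apply/eqP/eqP => [/mnmP /(_ i)|-> //]; rewrite !pureE eqxx.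
case: eqP => // _ /eqP; rewrite muln_eq0 /= => /eqP E; by move: d0; rewrite E.
Qed.

Lemma al_in : al \in msupp f /\ ~~ excluded_mnm d al.
Proof.
have : al \in Omega f d by rewrite Om mem_seq1.
by rewrite mem_filter => /andP [].
Qed.

Lemma al_ne0 : al != 0%MM.
Proof. by have [_] := al_in; rewrite /excluded_mnm negb_or => /andP []. Qed.

Lemma al_npure (i : 'I_n) : al != pure_mnm d i.
Proof.
have [_] := al_in; rewrite /excluded_mnm negb_or => /andP [_].
by rewrite negb_exists => /forallP /(_ i).
Qed.

Lemma F_ne0 : f@_al != 0.
Proof. by have [] := al_in; rewrite mcoeff_msupp. Qed.

Lemma fE : f = (f@_0%MM)%:MP + \sum_(i < n) f@_(pure_mnm d i) *: 'X_[pure_mnm d i]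
                + f@_al *: 'X_[al].
Proof.
apply/mpolyP => m.
rewrite !mcoeffD mcoeffC raddf_sum /= mcoeffZ mcoeffX.
under eq_bigr do rewrite mcoeffZ mcoeffX.
case: (boolP (excluded_mnm d m)) => [/orP [/eqP ->|/existsP [k /eqP ->]]|nex].
  rewrite eqxx mulr1 big1 ?addr0; last by move=> i _; rewrite (negbTE (pure_neq0 i)) mulr0.
  by rewrite (negbTE al_ne0) mulr0 addr0.
- rewrite (negbTE (pure_neq0 k)) mulr0 add0r (bigD1 k) //= eqxx mulr1.
  rewrite big1 ?addr0; last by move=> i /negbTE ik; rewrite pure_inj ik mulr0.
  by rewrite (negbTE (al_npure k)) mulr0 addr0.
- have m0 : m != 0%MM by move: nex; rewrite /excluded_mnm negb_or => /andP [].
  have mp i : pure_mnm d i != m.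
    move: nex; rewrite /excluded_mnm negb_or => /andP [_].
    by rewrite negb_exists => /forallP /(_ i); rewrite eq_sym.
  rewrite (negbTE m0) mulr0 add0r big1 ?add0r; last by move=> i _; rewrite (negbTE (mp i)) mulr0.
  case: (eqVneq al m) => [->|alm]; first by rewrite mulr1.
  rewrite mulr0; apply/eqP; rewrite -[_ == 0]negbK -mcoeff_msupp; apply/negP => ms.
  have : m \in Omega f d by rewrite mem_filter nex ms.
  by rewrite Om mem_seq1 eq_sym (negbTE alm).
Qed.

Lemma fEval (x : 'I_n -> R) :
  f.@[x] = f@_0%MM + \sum_(i < n) f@_(pure_mnm d i) * x i ^+ (2 * d) + f@_al * mpow x al.
Proof.
rewrite {1}fE !mevalD mevalC mevalZ mevalX raddf_sum /=.
by under eq_bigr do rewrite mevalZ pureX rmorphXn /= mevalXU.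
Qed.
End Struct.

Section Key.
Variables (R : realType) (n : nat).

Definition root (k : nat) (x : R) := x `^ (k%:R^-1).

Lemma rootK k x : (0 < k)%N -> 0 <= x -> root k x ^+ k = x.
Proof.
move=> k0 x0; rewrite /root -powR_mulrn ?powR_ge0 // -powRrM mulVf ?powRr1 //.
by rewrite pnatr_eq0 -lt0n.
Qed.

Lemma root_ge0 k x : 0 <= root k x. Proof. exact: powR_ge0. Qed.
Lemma root_gt0 k x : 0 < x -> 0 < root k x. Proof. exact: powR_gt0. Qed.

Lemma rootX k j x : 0 <= x -> root k (x ^+ j) = root k x ^+ j.
Proof.
move=> x0; rewrite /root -(powR_mulrn j x0) -(powR_mulrn j (powR_ge0 x _)).
by rewrite -!powRrM mulrC.
Qed.

Lemma mpow_gt0 (x : 'I_n -> R) (al : 'X_{1..n}) :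
  (forall i, (0 < al i)%N -> 0 < x i) -> 0 < mpow x al.
Proof.
move=> H; apply: prodr_gt0 => i _; case: (posnP (al i)) => [->|h]; first by rewrite expr0.
exact/exprn_gt0/H.
Qed.

Lemma mpowM (x y : 'I_n -> R) (al : 'X_{1..n}) : mpow (fun i => x i * y i) al = mpow x al * mpow y al.
Proof. by rewrite /mpow -big_split /=; apply: eq_bigr => i _; rewrite exprMn. Qed.

Lemma mpowC (c : R) (al : 'X_{1..n}) : mpow (fun _ => c) al = c ^+ mdeg al.
Proof. by rewrite /mpow prodrXr mdegE. Qed.

Lemma mself_gt0 (al : 'X_{1..n}) : 0 < mself R al.
Proof. by apply: mpow_gt0 => i; rewrite ltr0n. Qed.

Definition lam (m : nat) (a : 'I_n -> R) (al : 'X_{1..n}) i := root m (a i / (al i)%:R).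

Lemma lamK m (a : 'I_n -> R) (al : 'X_{1..n}) (i : 'I_n) : (0 < m)%N -> 0 <= a i -> (al i = 0%N -> a i = 0) ->
  (al i)%:R * lam m a al i ^+ m = a i.
Proof.
move=> m0 a0 h; case: (posnP (al i)) => [e|p]; first by rewrite e h // mul0r.
rewrite /lam rootK //; last by rewrite divr_ge0 ?ler0n.
by rewrite mulrC divfK // pnatr_eq0 -lt0n.
Qed.

Lemma lam_gt0 m (a : 'I_n -> R) (al : 'X_{1..n}) (i : 'I_n) : 0 < a i -> (0 < al i)%N -> 0 < lam m a al i.
Proof. by move=> a0 p; apply: root_gt0; rewrite divr_gt0 // ltr0n. Qed.

Lemma mpow_lamX m (a : 'I_n -> R) (al : 'X_{1..n}) : (0 < m)%N -> (forall i, 0 <= a i) ->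
  (forall i, al i = 0%N -> a i = 0) ->
  mpow (lam m a al) al ^+ m = mpow a al / mself R al.
Proof.
move=> m0 a0 h; rewrite /mself /mpow -prodrXl -prodf_div; apply: eq_bigr => i _.
case: (posnP (al i)) => [->|p]; first by rewrite !expr0 expr1n divr1.
rewrite -exprM mulnC exprM -[a i](@lamK m a al i m0 (a0 i) (h i)) exprMn mulrAC divff ?mul1r //.
by rewrite expf_neq0 // pnatr_eq0 -lt0n.
Qed.

Definition mu m (a : 'I_n -> R) (al : 'X_{1..n}) (G : R) :=
  root (m - mdeg al) (`|G| / (m%:R * mpow (lam m a al) al)).

Section KeyHyp.
Variables (m : nat) (a : 'I_n -> R) (al : 'X_{1..n}) (G : R).
Hypotheses (m0 : (0 < m)%N) (a0 : forall i, 0 <= a i)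
  (aP : forall i, al i = 0%N -> a i = 0) (aP' : forall i, (0 < al i)%N -> 0 < a i).

Lemma lam_pos : 0 < mpow (lam m a al) al.
Proof. by apply: mpow_gt0 => i p; apply: lam_gt0 => //; apply: aP'. Qed.

Lemma mpow_a_pos : 0 < mpow a al.
Proof. by apply: mpow_gt0. Qed.

Lemma muK : (mdeg al < m)%N ->
  m%:R * mpow (lam m a al) al * mu m a al G ^+ (m - mdeg al) = `|G|.
Proof.
move=> lt; rewrite /mu rootK ?subn_gt0 //; last first.
  by rewrite divr_ge0 // mulr_ge0 // ltW // lam_pos.
rewrite mulrC divfK //; rewrite mulf_neq0 ?pnatr_eq0 -?lt0n //.
by rewrite gt_eqF // lam_pos.
Qed.

Lemma T_eq :
  (m - mdeg al)%N%:R *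
   powR (`|G| ^+ m * mself R al / (m%:R ^+ m * mpow a al)) ((m - mdeg al)%N%:R^-1)
  = (m - mdeg al)%N%:R * mu m a al G ^+ m.
Proof.
congr (_ * _); rewrite /mu -rootX; last first.
  by rewrite divr_ge0 // mulr_ge0 ?ler0n // ltW // lam_pos.
rewrite /root; f_equal.
rewrite expr_div_n exprMn mpow_lamX //.
have h1 := mpow_a_pos; have h2 := mself_gt0 al.
have h3 : (m%:R : R) != 0 by rewrite pnatr_eq0 -lt0n.
field. all: rewrite ?h3 ?gt_eqF ?expf_neq0 ?exprn_gt0 ?ltr0n //.
Qed.
End KeyHyp.
End Key.

Section Amgm.
Variables (R : realType) (n : nat).
Notation P := {mpoly R[n]}.

Lemma sum_nseq (T : Type) (k : nat) (x : T) (F : T -> P) :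
  \sum_(i <- nseq k x) F i = F x *+ k.
Proof. by elim: k => [|k IH]; rewrite ?big_nil // big_cons IH mulrS. Qed.

Lemma prod_nseq (T : Type) (k : nat) (x : T) (F : T -> P) :
  \prod_(i <- nseq k x) F i = F x ^+ k.
Proof. by elim: k => [|k IH]; rewrite ?big_nil // big_cons IH exprS. Qed.

Lemma size_flat (T : Type) (r : seq 'I_n) (g : 'I_n -> nat) (h : 'I_n -> T) :
  size (flatten [seq nseq (g i) (h i) | i <- r]) = \sum_(i <- r) g i.
Proof. by elim: r => [|i r IH]; rewrite ?big_nil // big_cons /= size_cat size_nseq IH. Qed.

Lemma amgm_sos (d : nat) (a : 'I_n -> R) (al : 'X_{1..n}) (b : nat) (mu0 G : R) :
  (0 < d)%N -> (forall i, 0 <= a i) -> (forall i, al i = 0%N -> a i = 0) ->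
  (mdeg al + b = 2 * d)%N ->
  (2 * d)%:R * mpow (lam (2 * d) a al) al * mu0 ^+ b = `|G| ->
  is_sos (\sum_(i < n) a i *: ('X_[pure_mnm d i] : P) + (b%:R * mu0 ^+ (2 * d))%:MP
          + G *: 'X_[al]).
Proof.
move=> d0 a0 aP sz HG.
set lm := lam (2 * d) a al.
set s := flatten [seq nseq (al i) ((lm i)%:MP * 'X_i : P) | i <- index_enum 'I_n]
          ++ nseq b (mu0%:MP : P).
set e : R := if G < 0 then 1 else -1.
have e2 : e ^+ 2 = 1 by rewrite /e; case: ifP => _; rewrite ?expr1n ?sqrrN ?expr1n.
have eG : - (`|G| * e) = G.
  rewrite /e; case: ifP => [/ltW/ler0_norm -> |/negbT]; first by rewrite mulr1 opprK.
  by rewrite -leNgt => /ger0_norm ->; rewrite mulrN1 opprK.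
have szs : size s = (2 * d)%N.
  by rewrite size_cat size_nseq size_flat -sz mdegE.
have := G_sos szs e2.
have -> : \sum_(p <- s) p ^+ (2 * d)
   = \sum_(i < n) a i *: ('X_[pure_mnm d i] : P) + (b%:R * mu0 ^+ (2 * d))%:MP.
  rewrite big_cat /= big_flatten /= big_map sum_nseq; congr (_ + _).
    apply: eq_bigr => i _; rewrite sum_nseq exprMn -rmorphXn /= -pureX.
    rewrite -(@lamK _ _ (2 * d) a al i _ (a0 i) (aP i)); last by rewrite muln_gt0.
    by rewrite -mul_mpolyC mpolyCM mpolyC_nat -mulr_natl; ring.
  by rewrite mpolyCM mpolyC_nat rmorphXn mulr_natl.
have -> : \prod_(p <- s) p = (mpow lm al * mu0 ^+ b)%:MP * 'X_[al].
  rewrite big_cat /= big_flatten /= big_map prod_nseq mpolyXE_id /mpow mpolyCM.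
  rewrite rmorph_prod /= rmorphXn /=.
  have -> : \prod_(j <- index_enum 'I_n) \prod_(i <- nseq (al j) ((lm j)%:MP * 'X_j)) i
     = \prod_(i < n) ((lm i)%:MP * 'X_i) ^+ al i.
    by apply: eq_bigr => i _; rewrite prod_nseq.
  have -> : \prod_(i < n) ((lm i)%:MP * ('X_i : P)) ^+ al i
     = \prod_(i < n) (lm i ^+ al i)%:MP * \prod_(i < n) 'X_i ^+ al i.
    by rewrite -big_split; apply: eq_bigr => i _; rewrite exprMn rmorphXn.
  ring.
set S := \sum_(i < n) _.
have -> : (2 * d)%:R * e%:MP * ((mpow lm al * mu0 ^+ b)%:MP * ('X_[al] : P))
   = (`|G| * e)%:MP * 'X_[al].
  by rewrite -HG -mpolyC_nat !mpolyCM; ring.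
by rewrite -mulNr -mpolyCN eG mul_mpolyC.
Qed.
End Amgm.

Section Main.
Variables (R : realType) (n d : nat) (f : {mpoly R[n]}) (al : 'X_{1..n}).
Hypotheses (d0 : (0 < d)%N) (msz : msize f = (2 * d).+1) (Om : Omega f d = [:: al]).
Notation P := {mpoly R[n]}.
Notation c := (fun i : 'I_n => f@_(pure_mnm d i)).
Notation F := (f@_al).
Notation f0 := (f@_0%MM).

Lemma mdeg_le : (mdeg al <= 2 * d)%N.
Proof. by have [/msize_mdeg_lt] := al_in Om; rewrite msz ltnS. Qed.

Definition inD := (F < 0) || [exists i : 'I_n, odd (al i)].

Lemma DeltaE : Delta f d = if inD then [:: al] else [::].
Proof. by rewrite /Delta Om /= /inD; case: ifP. Qed.

Lemma F_abs : `|F| > 0.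
Proof. by rewrite normr_gt0 (F_ne0 Om). Qed.

Lemma sos_le (r : R) : is_sos (f - r%:MP) -> forall x, r <= f.@[x].
Proof.
move=> [s E] x; rewrite -subr_ge0 -(mevalC x r) -mevalB E raddf_sum /=.
by apply: sumr_ge0 => q _; rewrite rmorphXn /= sqr_ge0.
Qed.

Lemma f_sub (r : R) : f - r%:MP =
  (f0 - r)%:MP + \sum_(i < n) c i *: ('X_[pure_mnm d i] : P) + F *: 'X_[al].
Proof. by rewrite {1}(fE d0 Om) mpolyCB; ring. Qed.

Lemma sos_pure (b : 'I_n -> R) : (forall i, 0 <= b i) ->
  is_sos (\sum_(i < n) b i *: ('X_[pure_mnm d i] : P)).
Proof.
move=> b0; apply: sos_sum => i; rewrite -mul_mpolyC pureX mulnC exprM.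
by apply: sosZ => //; apply: sos_sq.
Qed.

Lemma feas_sos (r : R) : gp_feasible f d r -> is_sos (f - r%:MP).
Proof.
move=> [a [Ha [H1 [H2 H3]]]].
rewrite /Delta_lt DeltaE in H1 H2 H3 Ha.
case: ifP => hD in H1 H2 H3 Ha; last first.
-
  rewrite big_nil subr_ge0 in H3.
  have c0 i : 0 <= c i by have := H2 i; rewrite big_nil.
  rewrite f_sub; apply: sosD; first (apply: sosD; [by apply: sosC; rewrite subr_ge0|exact: sos_pure]).
  have Fp : 0 < F.
    by move: hD; rewrite /inD => /negbT; rewrite negb_or => /andP [+ _]; rewrite -leNgt le_eqVlt eq_sym (negbTE (F_ne0 Om)).
  have ev : forall i, ~~ odd (al i).
    by move: hD; rewrite /inD => /negbT; rewrite negb_or negb_exists => /andP [_ /forallP].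
  set g := [multinom (al i)./2 | i < n].
  have -> : ('X_[al] : P) = 'X_[g] ^+ 2.
    rewrite mpolyXn; congr mpolyX; apply/mnmP => i; rewrite mulmnE mnmE.
    by rewrite -{1}(odd_double_half (al i)) (negbTE (ev i)) add0n -mul2n mulnC.
  by rewrite -mul_mpolyC; apply: sosZ; [exact: ltW | exact: sos_sq].
set av := a al.
have av0 i : 0 <= av i by have [] := Ha al (mem_head _ _) i.
have avP i : al i = 0%N -> av i = 0 by have [_ []] := Ha al (mem_head _ _) i.
have avP' i : (0 < al i)%N -> 0 < av i.
  move=> p; rewrite lt_def av0 andbT; apply/eqP => /(proj1 (proj2 (Ha al (mem_head _ _) i))).
  by move=> e; rewrite e in p.
have avc i : av i <= c i by have := H2 i; rewrite big_seq1.
have Hs : forall K b mu0, 0 <= f0 - r - K ->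
  is_sos (\sum_(i < n) av i *: ('X_[pure_mnm d i] : P) + (b%:R * mu0 ^+ (2 * d))%:MP
          + F *: 'X_[al]) -> (K = b%:R * mu0 ^+ (2 * d)) -> is_sos (f - r%:MP).
  move=> K b mu0 K0 S KE.
  have -> : f - r%:MP = (f0 - r - K)%:MP
      + \sum_(i < n) (c i - av i) *: ('X_[pure_mnm d i] : P)
      + (\sum_(i < n) av i *: ('X_[pure_mnm d i] : P) + (b%:R * mu0 ^+ (2 * d))%:MP
          + F *: 'X_[al]).
    rewrite f_sub -KE !mpolyCB.
    have -> : \sum_(i < n) (c i - av i) *: ('X_[pure_mnm d i] : P)
      = \sum_(i < n) c i *: ('X_[pure_mnm d i] : P) - \sum_(i < n) av i *: 'X_[pure_mnm d i].
      by rewrite -sumrB; apply: eq_bigr => i _; rewrite scalerBl.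
    ring.
  apply: sosD => //; apply: sosD; first by apply: sosC.
  by apply: sos_pure => i; rewrite subr_ge0.
case: (ltnP (mdeg al) (2 * d)) => hlt.
- rewrite /= hlt big_seq1 in H3.
  have m0 : (0 < 2 * d)%N by rewrite muln_gt0.
  rewrite (T_eq _ m0 av0 avP avP') in H3.
  apply: (Hs _ (2 * d - mdeg al)%N (mu (2 * d) av al F) _ _ erefl); first by rewrite subr_ge0.
  apply: amgm_sos => //; first by rewrite subnKC // ltnW.
  by apply: muK.
- have e2d : mdeg al = (2 * d)%N by apply/eqP; rewrite eqn_leq mdeg_le hlt.
  rewrite /= e2d ltnn big_nil subr_ge0 in H3.
  have H1' := H1 al (mem_head _ _) e2d; rewrite -/av in H1'.
  have m0 : (0 < 2 * d)%N by rewrite muln_gt0.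
  apply: (Hs 0 0%N 1); first by rewrite subr0 subr_ge0.
    apply: amgm_sos => //; first by rewrite e2d addn0.
    rewrite expr0 mulr1; apply/eqP; rewrite -(eqrXn2 m0) ?mulr_ge0 ?ler0n ?ltW ?(lam_pos m0 av0 avP avP') //.
    rewrite exprMn mpow_lamX // mulrA H1'.
    by rewrite mulrK // unitfE gt_eqF // mself_gt0.
    exact: lam_pos.
    exact: F_abs.
  by rewrite mul0r.
Qed.

Lemma mpow0 (x : 'I_n -> R) (i : 'I_n) (b : 'X_{1..n}) : x i = 0 -> (0 < b i)%N -> mpow x b = 0.
Proof. by move=> xi p; rewrite /mpow (bigD1 i) //= xi expr0n gtn_eqF // mul0r. Qed.

Lemma al_pos : exists i, (0 < al i)%N.
Proof.
case: (boolP [exists i, (0 < al i)%N]) => [/existsP //|]; rewrite negb_exists => /forallP H.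
have : al = 0%MM by apply/mnmP => i; rewrite mnm0E; have := H i; rewrite lt0n negbK => /eqP.
by move/eqP; rewrite (negbTE (al_ne0 Om)).
Qed.

Definition lbnd (r : R) := forall x, r <= f.@[x].

Lemma D0 r : lbnd r -> r <= f0.
Proof.
move=> lb; have := lb (fun _ => 0); rewrite (fEval d0 Om).
have [i p] := al_pos.
rewrite (mpow0 (i := i)) // mulr0 addr0 big1 ?addr0 // => j _.
by rewrite expr0n muln_eq0 /= gtn_eqF // mulr0.
Qed.

Lemma sum_unit (i : 'I_n) (t : R) :
  \sum_(j < n) c j * (if j == i then t else 0) ^+ (2 * d) = c i * t ^+ (2 * d).
Proof.
rewrite (bigD1 i) //= eqxx big1 ?addr0 // => j /negbTE ->.
by rewrite expr0n muln_eq0 /= gtn_eqF // mulr0.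
Qed.

Lemma mpow_unit_bound (i : 'I_n) (t : R) : 1 <= t ->
  `|mpow (fun j => if j == i then t else 0) al| <= t ^+ (2 * d).-1.
Proof.
move=> t1.
have t0 : 0 <= t by apply: le_trans t1.
case: (boolP [exists j, (j != i) && (0 < al j)%N]) => [/existsP [j /andP [ji p]]|].
  by rewrite (mpow0 (i := j)) ?(negbTE ji) // normr0 exprn_ge0.
rewrite negb_exists => /forallP H.
have Hj j : j != i -> al j = 0%N.
  by move=> ji; have := H j; rewrite ji /= lt0n negbK => /eqP.
have -> : mpow (fun j => if j == i then t else 0) al = t ^+ al i.
  rewrite /mpow (bigD1 i) //= eqxx big1 ?mulr1 // => j ji.
  by rewrite (Hj j ji) expr0.
have mi : mdeg al = al i.
  by rewrite mdegE (bigD1 i) //= big1 ?addn0 // => j ji; rewrite Hj.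
have lti : (al i < 2 * d)%N.
  rewrite ltn_neqAle -mi mdeg_le andbT; apply/negP => /eqP E.
  have : al = pure_mnm d i.
    apply/mnmP => j; rewrite pureE; case: eqP => [<-|/eqP ji]; first by rewrite -E.
    by rewrite Hj // eq_sym.
  by move/eqP; rewrite (negbTE (al_npure Om i)).
rewrite ger0_norm ?exprn_ge0 //; apply: ler_weXn2l => //.
by rewrite -ltnS prednK // muln_gt0.
Qed.

Lemma D1 r : lbnd r -> forall i, 0 <= c i.
Proof.
move=> lb i; rewrite leNgt; apply/negP => ci.
set K := `|F| + `|f0 - r| + 1.
set t := Num.max 1 (K / (- c i)).
have t1 : 1 <= t by rewrite le_max lexx.
have tK : K / (- c i) <= t by rewrite le_max lexx orbT.
have cp : 0 < - c i by rewrite oppr_gt0.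
have ctK : K <= - c i * t.
  by have := ler_wpM2l (ltW cp) tK; rewrite mulrC divfK ?gt_eqF.
have := lb (fun j => if j == i then t else 0).
rewrite (fEval d0 Om) sum_unit.
have B := mpow_unit_bound i t1.
set u := t ^+ (2 * d).-1 in B.
have u1 : 1 <= u by apply: exprn_ege1.
have tu : t ^+ (2 * d) = t * u by rewrite /u -exprS prednK // muln_gt0.
rewrite tu.
set M := mpow _ al in B *.
have FM : F * M <= `|F| * u.
  by apply: le_trans (ler_norm _) _; rewrite normrM ler_wpM2l.
have A1 : f0 - r <= `|f0 - r| by apply: ler_norm.
have P1 : 0 <= (- c i * t - K) * u by apply: mulr_ge0; [rewrite subr_ge0|apply: le_trans u1].
have P2 : 0 <= (`|f0 - r| + 1) * (u - 1) by apply: mulr_ge0; [rewrite addr_ge0|rewrite subr_ge0].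
rewrite /K in P1; nra.
Qed.

Lemma signs : inD -> exists s : 'I_n -> R, (forall i, s i ^+ 2 = 1) /\ F * mpow s al = - `|F|.
Proof.
rewrite /inD; case: (ltP F 0) => [Fn _|Fp /= /existsP [k ok]].
  exists (fun _ => 1); split=> [i|]; first by rewrite expr1n.
  by rewrite /mpow big1 ?mulr1 ?ltr0_norm ?opprK // => i _; rewrite expr1n.
exists (fun i => if i == k then -1 else 1); split=> [i|]; first by case: ifP; rewrite ?sqrrN expr1n.
rewrite /mpow (bigD1 k) //= eqxx big1 ?mulr1; last by move=> i /negbTE ->; rewrite expr1n.
by rewrite -signr_odd ok expr1 ger0_norm // mulrN1.
Qed.

Lemma spow (s : 'I_n -> R) i : s i ^+ 2 = 1 -> s i ^+ (2 * d) = 1.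
Proof. by move=> h; rewrite exprM h expr1n. Qed.

Lemma D2 r : lbnd r -> inD -> forall k, (0 < al k)%N -> 0 < c k.
Proof.
move=> lb hD k pk; have [s [s2 sF]] := signs hD.
rewrite lt_def (D1 lb k) andbT; apply/negP => /eqP ck0.
set C := \sum_(j < n) `|c j|.
set t := Num.max 1 ((f0 + C - r + 1) / `|F|).
have t1 : 1 <= t by rewrite le_max lexx.
have tK : (f0 + C - r + 1) / `|F| <= t by rewrite le_max lexx orbT.
have Ft : f0 + C - r + 1 <= `|F| * t.
  by have := ler_wpM2l (ltW F_abs) tK; rewrite mulrC divfK ?gt_eqF ?F_abs.
set y := fun j : 'I_n => if j == k then t else 1.
have := lb (fun j => s j * y j); rewrite (fEval d0 Om).
have S1 : \sum_(j < n) c j * (s j * y j) ^+ (2 * d) <= C.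
  apply: ler_sum => j _; rewrite exprMn spow // mul1r /y.
  case: eqP => [->|_]; first by rewrite ck0 mul0r normr_ge0.
  by rewrite expr1n mulr1 ler_norm.
have M1 : F * mpow (fun j => s j * y j) al = - `|F| * t ^+ al k.
  rewrite mpowM mulrA sF; congr (_ * _).
  rewrite /mpow (bigD1 k) //= /y eqxx big1 ?mulr1 // => j /negbTE ->.
  by rewrite expr1n.
have tt : t <= t ^+ al k by apply: ler_eXnr.
have F0 := F_abs.
rewrite M1.
have P1 : 0 <= `|F| * (t ^+ al k - t) by apply: mulr_ge0; [exact: ltW|rewrite subr_ge0].
nra.
Qed.

Section Eval.
Variables (s : 'I_n -> R) (a : 'I_n -> R) (nu : R).
Hypotheses (s2 : forall i, s i ^+ 2 = 1) (sF : F * mpow s al = - `|F|)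
  (a0 : forall i, 0 <= a i) (aP : forall i, al i = 0%N -> a i = 0)
  (aP' : forall i, (0 < al i)%N -> 0 < a i) (ac : forall i, (0 < al i)%N -> a i = c i).

Lemma EV : f.@[fun i => if (0 < al i)%N then s i * (nu / lam (2 * d) a al i) else 0]
  = f0 + (mdeg al)%:R * nu ^+ (2 * d) - `|F| * nu ^+ mdeg al / mpow (lam (2 * d) a al) al.
Proof.
set lm := lam (2 * d) a al.
have m0 : (0 < 2 * d)%N by rewrite muln_gt0.
rewrite (fEval d0 Om); congr (_ + _ + _).
- rewrite mdegE natr_sum mulr_suml; apply: eq_bigr => i _.
  case: (posnP (al i)) => [e|p].
    by rewrite e /= expr0n muln_eq0 /= gtn_eqF // mulr0 mul0r.
  rewrite exprMn spow // mul1r expr_div_n -(ac p).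
  have l0 : lm i ^+ (2 * d) != 0 by rewrite expf_neq0 // gt_eqF // lam_gt0 // aP'.
  rewrite -[a i](@lamK _ _ (2 * d) a al i m0 (@a0 i) (@aP i)) -/lm.
  by field.
- have -> : mpow (fun i => if (0 < al i)%N then s i * (nu / lm i) else 0) al
          = mpow (fun i => s i * (nu * (lm i)^-1)) al.
    rewrite /mpow; apply: eq_bigr => i _.
    by case: (posnP (al i)) => [->|p]; rewrite ?expr0 // p.
  rewrite mpowM mulrA sF mpowM mpowC.
  have -> : mpow (fun i => (lm i)^-1) al = (mpow lm al)^-1.
    by rewrite /mpow -prodfV; apply: eq_bigr => i _; rewrite exprVn.
  by rewrite mulNr mulrA.
Qed.
End Eval.

Lemma lb_feas r : lbnd r -> gp_feasible f d r.
Proof.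
move=> lb; have c0 := D1 lb; have r0 := D0 lb.
rewrite /gp_feasible /Delta_lt DeltaE.
case: ifP => hD; last first.
  exists (fun _ _ => 0); split => //; split => //; split => [i|]; rewrite big_nil //.
  by rewrite subr_ge0.
have [s [s2 sF]] := signs hD.
have m0 : (0 < 2 * d)%N by rewrite muln_gt0.
set a := fun i => if (0 < al i)%N then c i else 0.
have a0 i : 0 <= a i by rewrite /a; case: ifP.
have aP i : al i = 0%N -> a i = 0 by rewrite /a => ->.
have aP' i : (0 < al i)%N -> 0 < a i by rewrite /a => p; rewrite p; apply: D2.
have ac i : (0 < al i)%N -> a i = c i by rewrite /a => ->.
have aiff i : (a i = 0 <-> al i = 0%N).
  split=> [h|]; last exact: aP.
  by case: (posnP (al i)) => // p; have := aP' i p; rewrite h ltxx.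
have ale i : a i <= c i by rewrite /a; case: ifP.
set lm := lam (2 * d) a al.
have lp : 0 < mpow lm al := lam_pos (2 * d) aP'.
have F0 := F_abs.
case: (ltnP (mdeg al) (2 * d)) => hlt.
- exists (fun _ => a); split.
    by move=> m; rewrite mem_seq1 => /eqP -> i; split => //; apply: aiff.
  split; first by move=> m; rewrite mem_seq1 => /eqP -> e; rewrite e ltnn in hlt.
  split; first by move=> i; rewrite big_seq1.
  rewrite /= hlt big_seq1 (T_eq _ m0 a0 aP aP').
  set mu0 := mu (2 * d) a al F.
  have K := muK F m0 aP' hlt; rewrite -/mu0 -/lm in K.
  have := lb (fun i => if (0 < al i)%N then s i * (mu0 / lm i) else 0).
  rewrite (EV _ s2 sF a0 aP aP' ac) -/lm -K.
  have -> : (2 * d)%:R * mpow lm al * mu0 ^+ (2 * d - mdeg al) * mu0 ^+ mdeg al / mpow lm al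
     = (2 * d)%:R * mu0 ^+ (2 * d).
    have E : mu0 ^+ (2 * d) = mu0 ^+ (2 * d - mdeg al) * mu0 ^+ mdeg al by rewrite -exprD subnK // ltnW.
    by rewrite E; field; rewrite gt_eqF.
  rewrite natrB ?(ltnW hlt) //; lra.
- have e2d : mdeg al = (2 * d)%N by apply/eqP; rewrite eqn_leq mdeg_le hlt.
  set rho := `|F| / ((2 * d)%:R * mpow lm al).
  have rho0 : 0 < rho by rewrite divr_gt0 // mulr_gt0 // ltr0n.
  have rho1 : rho <= 1.
    rewrite leNgt; apply/negP => rg.
    set del := `|F| / mpow lm al - (2 * d)%:R.
    have dp : 0 < del.
      rewrite subr_gt0 ltr_pdivlMr //; move: rg; rewrite /rho ltr_pdivlMr ?mul1r //.
      by rewrite mulr_gt0 // ltr0n.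
    set nu := root (2 * d) ((`|f0 - r| + 1) / del).
    have := lb (fun i => if (0 < al i)%N then s i * (nu / lm i) else 0).
    rewrite (EV _ s2 sF a0 aP aP' ac) -/lm e2d.
    have -> : nu ^+ (2 * d) = (`|f0 - r| + 1) / del.
      have hq : 0 <= (`|f0 - r| + 1) / del by rewrite divr_ge0 ?ltW // addr_ge0.
      by rewrite rootK.
    have A1 : f0 - r <= `|f0 - r| by apply: ler_norm.
    have -> : f0 + (2 * d)%:R * ((`|f0 - r| + 1) / del) - `|F| * ((`|f0 - r| + 1) / del) / mpow lm al
       = f0 - (`|f0 - r| + 1).
      have Q : 0 < `|F| - (2 * d)%:R * mpow lm al.
        by have := mulr_gt0 dp lp; rewrite /del mulrBl divfK ?gt_eqF.
      rewrite natrM in Q.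
      rewrite /del; field; apply/andP; split; apply/eqP => E; lra.
    lra.
  exists (fun _ i => rho * a i); split.
    move=> m; rewrite mem_seq1 => /eqP -> i; split; first by rewrite mulr_ge0 // ltW.
    by rewrite -aiff; split => [/eqP|->]; rewrite ?mulr0 // mulf_eq0 gt_eqF //= => /eqP.
  split.
    move=> m; rewrite mem_seq1 => /eqP -> _.
    rewrite mpowM mpowC e2d.
    have X := mpow_lamX m0 a0 aP; rewrite -/lm in X.
    have h1 := mpow_a_pos aP'; have h2 := mself_gt0 R al.
    have E : rho ^+ (2 * d) = `|F| ^+ (2 * d) / ((2 * d)%:R ^+ (2 * d) * (mpow a al / mself R al)).
      by rewrite /rho expr_div_n exprMn X.
    rewrite E; field; rewrite ?gt_eqF ?expf_neq0 // ?pnatr_eq0 -?lt0n //.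
    by rewrite exprn_gt0 // ltr0n.
  split.
    move=> i; rewrite big_seq1; apply: le_trans (ale i).
    by rewrite ler_piMl.
  by rewrite /= e2d ltnn big_nil subr_ge0.
Qed.
End Main.

Unset Implicit Arguments.

Theorem mainTheorem5 (R : realType) (n d : nat) (f : {mpoly R[n]}) :
  (0 < d)%N ->
  msize f = (2 * d).+1 ->
  size (Omega f d) = 1%N ->
  f_star f = f_sos f /\ f_sos f = f_gp f d.
Proof.
move=> d0 msz.
case E: (Omega f d) => [|al [|]] // _.
have le1 : (f_sos f <= f_star f)%E.
  apply: ge_ereal_sup => y [r /= sr <-].
  apply: le_ereal_inf_tmp => z [x _ <-]; rewrite lee_fin.
  exact: sos_le.
have le2 : (f_gp f d <= f_sos f)%E.
  apply: le_ereal_sup => y [r fr <-]; exists r => //.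
  exact: (feas_sos d0 msz E).
have fx x : (f_star f <= (f.@[x])%:E)%E.
  by apply: ge_ereal_inf; exists (f.@[x])%:E => //; exists x.
have le3 : (f_star f <= f_gp f d)%E.
  case Es: (f_star f) => [s| |].
  - apply: ereal_sup_ubound; exists s => //; apply: (lb_feas d0 msz E) => x.
    by have := fx x; rewrite Es lee_fin.
  - by have := fx (fun _ => 0); rewrite Es.
  - exact: leNye.
split; apply/eqP; rewrite eq_le.
- by rewrite le1 (le_trans le3 le2).
- by rewrite le2 (le_trans le1 le3).
Qed.
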